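(* Let $X$ be a vector field on $\mathbb{S}^1$ which is not (the restriction of) a Killing vector field, with support function $\phi_X$. Then any two distinct spacelike support planes of $\mathrm{epi}^+(\phi_X^-)$ at points of $\mathrm{gr}(\phi_X^-|_{\mathbb{D}^2})$ (resp. of $\mathrm{epi}^-(\phi_X^+)$ at points of $\mathrm{gr}(\phi_X^+|_{\mathbb{D}^2})$) intersect in a spacelike geodesic of $\mathbb{D}^2\times\mathbb{R}$.
   Context: $\mathbb{R}^{1,2}$ is $\mathbb{R}^3$ with $\langle x,y\rangle=-x_0y_0+x_1y_1+x_2y_2$; $\mathbb{D}^2$ is the open unit disk, $\mathbb{S}^1$ its boundary. A vector field $X$ on $\mathbb{S}^1$ is $X(z)=iz\phi_X(z)$; it is the restriction of a Killing field iff $\phi_X(z)=\langle(1,z),\sigma\rangle$ for some $\sigma\in\mathbb{R}^{1,2}$. $\phi_X^-(\eta)=\sup\{a(\eta):a\text{ affine},a|_{\mathbb{S}^1}\le\phi_X\}$, $\phi_X^+(\eta)=\inf\{a(\eta):a\text{ affine},a|_{\mathbb{S}^1}\ge\phi_X\}$ for $\eta\in\overline{\mathbb{D}^2}$; $\mathrm{epi}^+(\phi_X^-)=\{(\eta,t)\in\overline{\mathbb{D}^2}\times\mathbb{R}:t\ge\phi_X^-(\eta)\}$, $\mathrm{epi}^-(\phi_X^+)=\{(\eta,t):t\le\phi_X^+(\eta)\}$. Spacelike planes are the non-vertical planes $P_\sigma=\{(\eta,t)\in\mathbb{D}^2\times\mathbb{R}:t=\langle(1,\eta),\sigma\rangle\}$,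 $\sigma\in\mathbb{R}^{1,2}$. $P_\sigma$ is a support plane of $\mathrm{epi}^+(\phi_X^-)$ at a point of $\mathrm{gr}(\phi_X^-|_{\mathbb{D}^2})$ if $\langle(1,\eta),\sigma\rangle\le\phi_X^-(\eta)$ for all $\eta\in\mathbb{D}^2$ with equality at some $\eta_0\in\mathbb{D}^2$ (resp. for $\mathrm{epi}^-(\phi^+_X)$: $\ge\phi_X^+$ with equality somewhere). A spacelike geodesic of $\mathbb{D}^2\times\mathbb{R}$ is a nonempty intersection of $\mathbb{D}^2\times\mathbb{R}$ with an affine line of $\mathbb{R}^3$ that is not vertical (not of the form $\{p\}\times\mathbb{R}$). *)

(* Defs.v *)
From HB Require Import structures.
From mathcomp Require Import all_boot all_order all_algebra.
From mathcomp Require Import all_classical all_reals all_analysis.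
Set Implicit Arguments. Unset Strict Implicit. Unset Printing Implicit Defensive.
Import Order.TTheory GRing.Theory Num.Theory.
Local Open Scope classical_set_scope.
Local Open Scope ring_scope.

Section Defs.
Variable R : realType.

(* Points of R^{1,2} are triples ((x0, x1), x2). *)
Definition mink (x y : R * R * R) : R :=
  - (x.1.1 * y.1.1) + x.1.2 * y.1.2 + x.2 * y.2.

Definition lift (eta : R * R) : R * R * R := (1, eta.1, eta.2).

Definition S1 : set (R * R) := [set z | z.1 ^+ 2 + z.2 ^+ 2 = 1].
Definition D2 : set (R * R) := [set z | z.1 ^+ 2 + z.2 ^+ 2 < 1].
Definition cD2 : set (R * R) := [set z | z.1 ^+ 2 + z.2 ^+ 2 <= 1].

Definition affine (c : R * R * R) (eta : R * R) : R :=
  c.1.1 + c.1.2 * eta.1 + c.2 * eta.2.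

Definition killing (phi : R * R -> R) : Prop :=
  exists sigma : R * R * R, forall z, S1 z -> phi z = mink (lift z) sigma.

Definition phi_minus (phi : R * R -> R) (eta : R * R) : R :=
  sup [set affine c eta | c in [set c | forall z, S1 z -> affine c z <= phi z]].

Definition phi_plus (phi : R * R -> R) (eta : R * R) : R :=
  inf [set affine c eta | c in [set c | forall z, S1 z -> phi z <= affine c z]].

Definition plane (sigma : R * R * R) : set ((R * R) * R) :=
  [set p | D2 p.1 /\ p.2 = mink (lift p.1) sigma].

Definition support_minus (phi : R * R -> R) (sigma : R * R * R) : Prop :=
  (forall eta, D2 eta -> mink (lift eta) sigma <= phi_minus phi eta) /\
  (exists eta0, D2 eta0 /\ mink (lift eta0) sigma = phi_minus phi eta0).

Definition support_plus (phi : R * R -> R) (sigma : R * R * R) : Prop :=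
  (forall eta, D2 eta -> phi_plus phi eta <= mink (lift eta) sigma) /\
  (exists eta0, D2 eta0 /\ mink (lift eta0) sigma = phi_plus phi eta0).

(* S is a spacelike geodesic of D^2 x R: the nonempty intersection of
   D^2 x R with a non-vertical affine line {p + t v} of R^3 *)
Definition spacelike_geodesic (S : set ((R * R) * R)) : Prop :=
  exists (p v : (R * R) * R),
    (v.1 <> (0, 0)) /\
    S = [set q | D2 q.1 /\ exists t : R,
                   q = ((p.1.1 + t * v.1.1, p.1.2 + t * v.1.2), p.2 + t * v.2)] /\
    S !=set0.

End Defs.

(* Main.v *)
Require Import Defs.
From mathcomp Require Import all_boot all_order all_algebra.
From mathcomp Require Import all_classical all_reals all_analysis.
From mathcomp Require Import ring lra.
Import numFieldNormedType.Exports.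
Import Order.TTheory GRing.Theory Num.Theory.
Local Open Scope classical_set_scope.
Local Open Scope ring_scope.

Lemma seg_D2 {R : realType} (a b : R * R) (s : R) :
  D2 a -> D2 b -> 0 <= s -> s <= 1 ->
  D2 ((1 - s) * a.1 + s * b.1, (1 - s) * a.2 + s * b.2).
Proof.
case: a => a1 a2; case: b => b1 b2; rewrite /D2 /= => ha hb s0 s1.
have -> : ((1 - s) * a1 + s * b1) ^+ 2 + ((1 - s) * a2 + s * b2) ^+ 2 =
  (1 - s) * (a1 ^+ 2 + a2 ^+ 2) + s * (b1 ^+ 2 + b2 ^+ 2)
  - s * (1 - s) * ((a1 - b1) ^+ 2 + (a2 - b2) ^+ 2) by ring.
have h1 : 0 <= s * (1 - s) * ((a1 - b1) ^+ 2 + (a2 - b2) ^+ 2).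
  apply: mulr_ge0; first by apply: mulr_ge0; lra.
  by apply: addr_ge0; apply: sqr_ge0.
have h2 : (1 - s) * (a1 ^+ 2 + a2 ^+ 2) + s * (b1 ^+ 2 + b2 ^+ 2) < 1.
  have [->|sp] := eqVneq s 0; first by lra.
  have sp' : 0 < s by rewrite lt_def sp s0.
  have e1 : (1 - s) * (a1 ^+ 2 + a2 ^+ 2) <= (1 - s) by nra.
  have e2 : s * (b1 ^+ 2 + b2 ^+ 2) < s by nra.
  lra.
lra.
Qed.

Definition hd {R : realType} (sigma tau : R * R * R) (w : R * R) :=
  mink (Defs.lift w) sigma - mink (Defs.lift w) tau.

Lemma zero_exists {R : realType} (sigma tau : R * R * R) (e0 e1 : R * R) :
  D2 e0 -> D2 e1 -> 0 <= hd sigma tau e0 -> hd sigma tau e1 <= 0 ->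
  exists w, D2 w /\ mink (Defs.lift w) sigma = mink (Defs.lift w) tau.
Proof.
move=> d0 d1 h0 h1.
have aff : forall s, hd sigma tau ((1 - s) * e0.1 + s * e1.1, (1 - s) * e0.2 + s * e1.2)
   = (1 - s) * hd sigma tau e0 + s * hd sigma tau e1.
  move=> s; rewrite /hd /mink /Defs.lift /=; ring.
have [hz|hnz] := eqVneq (hd sigma tau e0 - hd sigma tau e1) 0.
  exists e0; split => //; apply/eqP; rewrite -subr_eq0; apply/eqP.
  rewrite -/(hd sigma tau e0); lra.
have hp : 0 < hd sigma tau e0 - hd sigma tau e1 by rewrite lt_def hnz /=; lra.
set s := hd sigma tau e0 / (hd sigma tau e0 - hd sigma tau e1).
have s0 : 0 <= s by apply: divr_ge0; lra.
have s1 : s <= 1 by rewrite /s ler_pdivrMr //; lra.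
exists ((1 - s) * e0.1 + s * e1.1, (1 - s) * e0.2 + s * e1.2); split.
  exact: seg_D2.
apply/eqP; rewrite -subr_eq0; apply/eqP.
rewrite -/(hd sigma tau _) aff /s; field; lra.
Qed.

Lemma geo_of {R : realType} (sigma tau : R * R * R) (w : R * R) :
  D2 w -> mink (Defs.lift w) sigma = mink (Defs.lift w) tau -> plane sigma <> plane tau ->
  spacelike_geodesic (plane sigma `&` plane tau).
Proof.
case: sigma => [[s0 s1] s2]; case: tau => [[t0 t1] t2]; case: w => x y.
rewrite /mink /Defs.lift /= => De heq hne.
set d1 := s1 - t1; set d2 := s2 - t2.
have dnz : (d1, d2) <> (0, 0).
  case=> e1 e2; apply: hne.
  have E1 : s1 = t1 by rewrite /d1 in e1; lra.
  have E2 : s2 = t2 by rewrite /d2 in e2; lra.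
  rewrite -E1 -E2 in heq *.
  have E0 : s0 = t0 by lra.
  by rewrite E0.
exists ((x, y), -(1 * s0) + x * s1 + y * s2).
exists ((- d2, d1), s1 * (- d2) + s2 * d1).
split; first by case=> a b; apply: dnz; congr (_, _); lra.
have N0 : d1 ^+ 2 + d2 ^+ 2 != 0.
  apply/negP => /eqP N; apply: dnz.
  have a : d1 = 0 by nra.
  have b : d2 = 0 by nra.
  by rewrite a b.
split.
  rewrite /plane /mink /Defs.lift; apply/seteqP; split => -[[a b] c] /=.
    move=> [[Da ->] [_ hc]]; split => //.
    exists (((a - x) * (- d2) + (b - y) * d1) / (d1 ^+ 2 + d2 ^+ 2)).
    have hl : d1 * (a - x) + d2 * (b - y) = 0 by rewrite /d1 /d2; lra.
    set P := (a - x) * - d2 + (b - y) * d1.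
    set N := d1 ^+ 2 + d2 ^+ 2.
    have Ha : a - x = P / N * - d2.
      apply: (mulIf N0); rewrite mulrAC divfK //.
      apply/eqP; rewrite -subr_eq0; apply/eqP.
      have -> : (a - x) * N - P * - d2 = d1 * (d1 * (a - x) + d2 * (b - y))
        by rewrite /N /P; ring.
      by rewrite hl mulr0.
    have Hb : b - y = P / N * d1.
      apply: (mulIf N0); rewrite mulrAC divfK //.
      apply/eqP; rewrite -subr_eq0; apply/eqP.
      have -> : (b - y) * N - P * d1 = d2 * (d1 * (a - x) + d2 * (b - y))
        by rewrite /N /P; ring.
      by rewrite hl mulr0.
    congr (_, _, _).
    - by rewrite -Ha; ring.
    - by rewrite -Hb; ring.
    - have -> : - (1 * s0) + a * s1 + b * s2 =
          - (1 * s0) + x * s1 + y * s2 + (a - x) * s1 + (b - y) * s2 by ring.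
      rewrite Ha Hb; ring.
  move=> [Da [t [ea eb ec]]]; subst a b c; split; split => //; [ring | rewrite heq /d1 /d2; ring].
exists ((x, y), -(1 * s0) + x * s1 + y * s2); split; split => //=.
Qed.

Theorem lemma4p1 (R : realType) (phi : R * R -> R)
    (phi_cont : {within @S1 R, continuous phi})
    (notK : ~ killing phi) :
  (forall sigma tau : R * R * R,
      support_minus phi sigma -> support_minus phi tau ->
      plane sigma <> plane tau ->
      spacelike_geodesic (plane sigma `&` plane tau)) /\
  (forall sigma tau : R * R * R,
      support_plus phi sigma -> support_plus phi tau ->
      plane sigma <> plane tau ->
      spacelike_geodesic (plane sigma `&` plane tau)).
Proof.
split => sigma tau [les [e0 [D0 E0]]] [let_ [e1 [D1 E1]]] hne.
  have [w [De He]] : exists w, D2 w /\ mink (Defs.lift w) sigma = mink (Defs.lift w) tau.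
    apply: (@zero_exists R sigma tau e0 e1 D0 D1); rewrite /hd.
      by rewrite subr_ge0 E0; apply: let_.
    by rewrite subr_le0 E1; apply: les.
  exact: geo_of De He hne.
have [w [De He]] : exists w, D2 w /\ mink (Defs.lift w) sigma = mink (Defs.lift w) tau.
  apply: (@zero_exists R sigma tau e1 e0 D1 D0); rewrite /hd.
    by rewrite subr_ge0 E1; apply: les.
  by rewrite subr_le0 E0; apply: let_.
exact: geo_of De He hne.
Qed.
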